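(* Let $G$ be a persistent graph with vertex order $<$ and let $p,q,r\in V(G)$ with $p<q<r$. If $\{p,q\}\in E(G)$ and $\{p,r\}\in E(G)$ but $\{q,r\}\notin E(G)$, then $p$ and $q$ have a common neighbor $b\in V(G)$ with $q<b<r$.
   Context: A persistent graph is a graph $G$ together with a linear order $v_1<v_2<\dots<v_n$ on $V(G)$ such that (1) $\{v_i,v_{i+1}\}\in E(G)$ for all $i$; (2) X-property: for all $p<q<r<s$, if $\{p,r\}\in E(G)$ and $\{q,s\}\in E(G)$ then $\{p,s\}\in E(G)$; (3) bar-property: if $\{p,q\}\in E(G)$ and $p,q$ are not consecutive in the order, then there is a vertex $r$ with $p<r<q$ adjacent to both $p$ and $q$. *)

(* Defs.v *)
From mathcomp Require Import all_boot.
Set Implicit Arguments. Unset Strict Implicit. Unset Printing Implicit Defensive.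

(* A simple graph on the vertex set 'I_n (vertices v_1 < ... < v_n are
   identified with 0 < 1 < ... < n-1 via the ordinal order). *)
Definition simple_graph (n : nat) (E : rel 'I_n) : Prop :=
  (forall x y, E x y = E y x) /\ (forall x, ~~ E x x).

Definition persistent (n : nat) (E : rel 'I_n) : Prop :=
  simple_graph E /\
  (forall i j : 'I_n, j = i.+1 :> nat -> E i j) /\
  (* (2) X-property *)
  (forall p q r s : 'I_n, p < q -> q < r -> r < s ->
      E p r -> E q s -> E p s) /\
  (* (3) bar-property *)
  (forall p q : 'I_n, p < q -> E p q -> q != p.+1 :> nat ->
      exists r : 'I_n, [/\ p < r, r < q, E p r & E r q]).

(* Main.v *)
Require Import Defs.
From mathcomp Require Import all_boot.
From mathcomp Require Import zify.

Lemma aux (n : nat) (E : rel 'I_n) (p q r : 'I_n) :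
  persistent E -> p < q -> q < r -> ~~ E q r -> E p q ->
  forall k (y : 'I_n), q - y <= k -> p <= y -> y < q -> E y r ->
  exists z : 'I_n, [/\ q < z, z < r & E p z].
Proof.
move=> [[Esym Eirr] [Econs [EX Ebar]]] pq qr nqr Epq.
elim=> [|k IH] y hk py yq Eyr; first by lia.
have [z [yz zr Eyz Ezr]] := Ebar y r (ltn_trans yq qr) Eyr ltac:(apply/eqP; lia).
case: (ltngtP z q) => hzq.
- apply: (IH z) => //; lia.
- exists z; split => //.
  case: (ltngtP p y) => hpy; [|lia|].
  + exact: (EX p y q z).
  + by have -> : p = y by apply: val_inj.
- have zq : z = q by apply: val_inj.
  by rewrite -zq Ezr in nqr.
Qed.

Theorem lemma2 (n : nat) (E : rel 'I_n) (p q r : 'I_n) :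
  persistent E -> p < q -> q < r ->
  E p q -> E p r -> ~~ E q r ->
  exists b : 'I_n, [/\ q < b, b < r, E p b & E q b].
Proof.
move=> HP pq.
move: {2}(val r) (leqnn r) => k; elim: k r => [|k IH] r hk qr Epq Epr nqr.
  by lia.
have [z [qz zr Epz]] := @aux n E p q r HP pq qr nqr Epq (q - p) p (leqnn _) (leqnn p) pq Epr.
case Eqz: (E q z).
  by exists z; split.
have [b [qb bz Epb Eqb]] := IH z ltac:(lia) qz Epq Epz (negbT Eqz).
exists b; split => //; lia.
Qed.
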